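(* Let $\theta>1$ and let $\eta^n\in\Omega_n$ be arbitrary deterministic configurations. Then for every $\lambda>0$, $$\limsup_{n\to\infty}\frac1n\log\mathbb P_{\delta_{\eta^n}}\Big[\sup_{t\in[0,T]}|\langle\pi^n_t,1\rangle-\langle\pi^n_0,1\rangle|>\lambda\Big]=-\infty.$$
   Context: Model: $\Sigma_n=\{1,\dots,n-1\}$, $\Omega_n=\{0,1\}^{\Sigma_n}$, $\alpha,\beta\in(0,1)$, $r_1=\alpha,r_{n-1}=\beta$, $T>0$; $\mathbb P_{\delta_{\eta^n}}$ is the law of the Markov process on $[0,T]$ with generator $n^2\mathcal L_n$, $(\mathcal L_nf)(\eta)=\sum_{x=1}^{n-2}[f(\eta^{x,x+1})-f(\eta)]+n^{-\theta}\sum_{x\in\{1,n-1\}}[r_x(1-\eta(x))+(1-r_x)\eta(x)][f(\sigma^x\eta)-f(\eta)]$ ($\eta^{x,x+1}$ exchanges values at $x,x+1$; $\sigma^x\eta$ flips the value at $x$), started at $\eta^n$. $\pi^n_t=\frac1n\sum_{x=1}^{n-1}\eta_t(x)\delta_{x/n}$, so $\langle\pi^n_t,1\rangle=\frac1n\sum_x\eta_t(x)$. *)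

(* Defs.v *)
From HB Require Import structures.
From mathcomp Require Import all_boot all_order all_algebra.
From mathcomp Require Import all_classical all_reals all_analysis.
Set Implicit Arguments. Unset Strict Implicit. Unset Printing Implicit Defensive.
Import Order.TTheory GRing.Theory Num.Theory.
Import numFieldNormedType.Exports.
Local Open Scope ring_scope.

Section CTMC.
Variables (R : realType) (S : finType).

(* [q x y] (x <> y) is the jump rate from x to y; diagonal entries are ignored. *)
Definition exit_rate (q : S -> S -> R) (x : S) : R := \sum_(z | z != x) q x z.

(* uniformization constant: strictly above every exit rate *)
Definition unif_const (q : S -> S -> R) : R :=
  1 + \big[Num.max/0]_(x : S) exit_rate q x.

Definition unif_kernel (q : S -> S -> R) (x y : S) : R :=
  if x == y then 1 - exit_rate q x / unif_const q else q x y / unif_const q.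

Definition skeleton_prob (q : S -> S -> R) (x0 : S) (k : nat)
    (E : seq S -> bool) : R :=
  \sum_(ys : k.-tuple S)
     (\prod_(i < k) unif_kernel q (nth x0 (x0 :: ys) i) (nth x0 ys i))
     * (E (x0 :: ys))%:R.

(* Law of the CTMC with rates q on [0,T] started at x0 (constructed by
   uniformization: Poisson(c) clock, jump chain unif_kernel).  The set of
   states visited by the cadlag path on [0,T] is exactly the set of states of
   the skeleton up to the number K of clock rings in [0,T], K ~ Poisson(cT).
   [path_event_prob q x0 T E] is the probability that the sequence of states
   visited during [0,T] satisfies E. *)
Definition path_event_prob (q : S -> S -> R) (x0 : S) (T : R)
    (E : seq S -> bool) : R :=
  let c := unif_const q in
  limn (series (fun k : nat =>
     expR (- (c * T)) * (c * T) ^+ k / (k`!)%:R * skeleton_prob q x0 k E)).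

End CTMC.

(* Omega_n = {0,1}^{Sigma_n}, Sigma_n = {1,...,n-1}; index i : 'I_(n-1)
   represents site x = i+1. *)
Definition Config (n : nat) := {ffun 'I_n.-1 -> bool}.

(* eta(x) for a site x given as a natural number (false outside Sigma_n) *)
Definition occ n (eta : Config n) (x : nat) : bool :=
  [exists i : 'I_n.-1, (i.+1 == x) && eta i].

Definition exch n (eta : Config n) (x : nat) : Config n :=
  [ffun i : 'I_n.-1 =>
     let y := i.+1 in
     occ eta (if y == x then x.+1 else if y == x.+1 then x else y)].

Definition flip n (eta : Config n) (x : nat) : Config n :=
  [ffun i : 'I_n.-1 => if i.+1 == x then ~~ occ eta x else eta i].

Section Model.
Variables (R : realType) (n : nat) (theta alpha beta : R).

Definition rsite (x : nat) : R := if x == 1%N then alpha else beta.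

Definition Lgen (f : Config n -> R) (eta : Config n) : R :=
  \sum_(1 <= x < n.-1) (f (exch eta x) - f eta)
  + (n%:R `^ (- theta)) *
    \sum_(x <- undup [:: 1%N; n.-1])
      (rsite x * (1 - (occ eta x)%:R) + (1 - rsite x) * (occ eta x)%:R)
      * (f (flip eta x) - f eta).

Definition rates (eta zeta : Config n) : R :=
  n%:R ^+ 2 * Lgen (fun xi => (xi == zeta)%:R) eta.

Definition mass (eta : Config n) : R :=
  n%:R^-1 * \sum_(i : 'I_n.-1) (eta i)%:R.

(* the event  sup_{t in [0,T]} |<pi_t,1> - <pi_0,1>| > lambda,
   read on the sequence of visited states (first entry = initial state) *)
Definition mass_dev_event (lambda : R) (eta0 : Config n) (s : seq (Config n)) : bool :=
  has (fun eta => lambda < `| mass eta - mass eta0 |) s.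

Definition prob_mass_dev (T lambda : R) (eta0 : Config n) : R :=
  path_event_prob rates eta0 T (mass_dev_event lambda eta0).

End Model.

Definition elog (R : realType) (p : R) : \bar R :=
  if p == 0 then -oo%E else (ln p)%:E.

(* Main.v *)
Require Import Defs.
From HB Require Import structures.
From mathcomp Require Import all_boot all_order all_algebra.
From mathcomp Require Import all_classical all_reals all_analysis.
From mathcomp Require Import perm ring lra.
Import Order.TTheory GRing.Theory Num.Theory.
Import numFieldNormedType.Exports.
Local Open Scope ring_scope.
Section P.
Variable R : realType.
Lemma series_pois (a : nat -> R) (x k : R) : 0 <= x -> 0 <= k ->
  (forall i, 0 <= a i <= k * exp_coeff x i) ->
  cvgn (series a) /\ 0 <= limn (series a) <= k * expR x.
Proof.
move=> x0 k0 ha.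
have e0 i : 0 <= k * exp_coeff x i by apply: mulr_ge0 => //; exact: exp_coeff_ge0.
have sE : series (fun i => k * exp_coeff x i) = (fun n => k * series (exp_coeff x) n).
  by apply/funext => n; rewrite /series /= big_distrr.
have cv : cvgn (series (fun i => k * exp_coeff x i)).
  by rewrite sE; apply: is_cvgMr; exact: is_cvg_series_exp_coeff.
have ca : cvgn (series a).
  by apply: (series_le_cvg _ e0) cv => i; case/andP: (ha i).
split => //; apply/andP; split.
  apply: limr_ge => //; apply: nearW => n; apply: sumr_ge0 => i _.
  by have /andP[] := ha i.
apply: le_trans (_ : limn (series (fun i => k * exp_coeff x i)) <= _).
  apply: ler_lim => //; apply: nearW => n; apply: ler_sum => i _.
  by have /andP[] := ha i.
rewrite sE limM //; last exact: is_cvg_series_exp_coeff.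
  by rewrite lim_cst.
exact: is_cvg_cst.
Qed.
End P.
Section Skel.
Variables (R : realType) (S : finType).

Lemma tuple_sum_cons k (F : k.+1.-tuple S -> R) :
  \sum_(t : k.+1.-tuple S) F t = \sum_(y : S) \sum_(t : k.-tuple S) F [tuple of y :: t].
Proof.
rewrite pair_big /=.
rewrite (reindex (fun p : S * k.-tuple S => [tuple of p.1 :: p.2])) //=.
exists (fun t : k.+1.-tuple S => (thead t, behead_tuple t)) => [[y t] _|t _] /=.
  by rewrite theadE; congr pair; apply: val_inj.
by rewrite [RHS]tuple_eta.
Qed.

Lemma tuple_sum0 (F : 0.-tuple S -> R) : \sum_(t : 0.-tuple S) F t = F [tuple].
Proof. rewrite (big_pred1 [tuple]) // => t; apply/esym/eqP; exact: tuple0. Qed.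

Definition W (K : S -> S -> R) (x0 : S) (k : nat) (f : seq S -> R) : R :=
  \sum_(ys : k.-tuple S)
     (\prod_(i < k) K (nth x0 (x0 :: ys) i) (nth x0 ys i)) * f (x0 :: ys).

Lemma W0 K x0 f : W K x0 0 f = f [:: x0].
Proof. by rewrite /W tuple_sum0 big_ord0 mul1r. Qed.

Lemma WS K x0 k f : W K x0 k.+1 f = \sum_y K x0 y * W K y k (fun s => f (x0 :: s)).
Proof.
rewrite /W tuple_sum_cons; apply: eq_bigr => y _; rewrite big_distrr.
apply: eq_bigr => t _ /=; rewrite big_ord_recl /= -mulrA; congr (_ * (_ * _)).
apply: eq_bigr => i _ /=; congr (K _ _).
  by rewrite add0n; apply: set_nth_default; rewrite /= size_tuple ltnS ltnW.
by rewrite add0n; apply: set_nth_default; rewrite size_tuple.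
Qed.

Lemma W_le K x0 k f g : (forall x y, 0 <= K x y) ->
  (forall t : k.-tuple S, f (x0 :: t) <= g (x0 :: t)) -> W K x0 k f <= W K x0 k g.
Proof.
move=> K0 fg; apply: ler_sum => t _; apply: ler_wpM2l; last exact: fg.
by apply: prodr_ge0 => i _.
Qed.

Lemma W_scale K x0 k a f : W K x0 k (fun s => a * f s) = a * W K x0 k f.
Proof. by rewrite /W big_distrr; apply: eq_bigr => t _; rewrite mulrCA. Qed.

Variable m : S -> R.
Fixpoint D (s : seq S) : R :=
  match s with a :: ((b :: _) as s') => `|m b - m a| + D s' | _ => 0 end.

Lemma D_ge0 s : 0 <= D s.
Proof. elim: s => // a [|b s] IH //=; exact: addr_ge0. Qed.

Lemma D_bound a s y : y \in a :: s -> `|m y - m a| <= D (a :: s).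
Proof.
elim: s a => [|b s IH] a; first by rewrite inE => /eqP ->; rewrite subrr normr0.
rewrite inE => /orP[/eqP ->|ys]; first by rewrite subrr normr0 D_ge0.
rewrite /= (le_trans (_ : _ <= `|m y - m b| + `|m b - m a|)) //.
  by rewrite (le_trans _ (ler_normD _ _)) // addrA subrK.
by rewrite addrC lerD2l; exact: IH.
Qed.

Lemma W_exp K u B : (forall x y, 0 <= K x y) -> 0 <= u ->
  (forall x, \sum_y K x y * expR (u * `|m y - m x|) <= B) ->
  forall k x0, W K x0 k (fun s => expR (u * D s)) <= B ^+ k.
Proof.
move=> K0 u0 hB; have B0 : forall x : S, 0 <= B.
  move=> x; apply: le_trans (hB x); apply: sumr_ge0 => y _.
  by apply: mulr_ge0 => //; exact: expR_ge0.
elim=> [|k IH] x0; first by rewrite W0 /= mulr0 expR0 expr0.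
rewrite WS exprS.
apply: le_trans (_ : \sum_y K x0 y * expR (u * `|m y - m x0|) * B ^+ k <= _).
  apply: ler_sum => y _; rewrite -mulrA; apply: ler_wpM2l => //.
  rewrite (_ : W K y k _ = W K y k (fun s => expR (u * `|m y - m x0|) * expR (u * D s))).
    by rewrite W_scale; apply: ler_wpM2l => //; exact: expR_ge0.
  rewrite /W; apply: eq_bigr => t _; congr (_ * _).
  by rewrite /= -expRD mulrDr.
rewrite -big_distrl /=; apply: ler_wpM2r; last exact: hB.
by apply: exprn_ge0; exact: B0.
Qed.
End Skel.
Section Mass.
Variables (R : realType) (n : nat).

Lemma occ_ord (eta : Config n) (i : 'I_n.-1) : occ eta i.+1 = eta i.
Proof.
apply/existsP/idP => [[j /andP[/eqP h e]]|e]; last by exists i; rewrite eqxx.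
by have -> : i = j by apply: val_inj => /=; case: h.
Qed.

Lemma sum_exch (eta : Config n) x : (1 <= x)%N -> (x < n.-1)%N ->
  \sum_(i : 'I_n.-1) ((exch eta x i)%:R : R) = \sum_(i : 'I_n.-1) (eta i)%:R.
Proof.
move=> x1 xn.
have ha : (x.-1 < n.-1)%N by rewrite (leq_ltn_trans _ xn) // leq_pred.
pose a := Ordinal ha; pose b := Ordinal xn.
have E : forall i, exch eta x i = eta (tperm a b i).
  move=> i; rewrite /exch ffunE /=.
  have ia : (i == a) = (i.+1 == x).
    by apply/eqP/eqP => [->|h]; [rewrite /= prednK | apply: val_inj; rewrite /= -h].
  have ib : (i == b) = (i.+1 == x.+1) by [].
  case: (eqVneq i a) ia => [-> _|ina]; first by rewrite tpermL /= prednK // eqxx; exact: (occ_ord eta b).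
  move/esym => ->; case: (eqVneq i b) ib => [-> _|inb]; first by rewrite tpermR eqxx -(occ_ord eta a) /= prednK.
  by move/esym => ->; rewrite tpermD 1?eq_sym // occ_ord.
rewrite (eq_bigr (fun i => (eta (tperm a b i))%:R)); last by move=> i _; rewrite E.
by rewrite [RHS](reindex_inj (@perm_inj _ (tperm a b))).
Qed.

Lemma mass_exch (eta : Config n) x : (1 <= x)%N -> (x < n.-1)%N ->
  mass R (exch eta x) = mass R eta.
Proof. by move=> x1 xn; rewrite /mass sum_exch. Qed.

Lemma mass_flip (eta : Config n) x : `|mass R (flip eta x) - mass R eta| <= n%:R^-1.
Proof.
rewrite /mass -mulrBr normrM ger0_norm ?invr_ge0 ?ler0n //.
rewrite -[leRHS]mulr1; apply: ler_wpM2l; first by rewrite invr_ge0 ler0n.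
rewrite -sumrB.
apply: le_trans (ler_norm_sum _ _ _) _.
apply: le_trans (_ : \sum_(i : 'I_n.-1) ((i.+1 == x)%:R : R) <= 1).
  apply: ler_sum => i _; rewrite /flip ffunE.
  case: eqP => [h|_]; last by rewrite subrr normr0.
  by rewrite -h occ_ord; case: (eta i); rewrite /= ?subr0 ?sub0r ?normrN normr1.
case: (pickP (fun i : 'I_n.-1 => i.+1 == x)) => [i0 hi0|h0]; last first.
  by rewrite big1 // => i _; rewrite h0.
rewrite (bigD1 i0) //= hi0 big1 ?addr0 // => j hj.
suff -> : (j.+1 == x) = false by [].
apply/negbTE; apply: contra hj => /eqP hj; apply/eqP/val_inj => /=.
by move/eqP: hi0; rewrite -hj; case.
Qed.
End Mass.
Section K.
Variables (R : realType) (S : finType) (q : S -> S -> R).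

Lemma exit_le x : exit_rate q x <= unif_const q - 1.
Proof. by rewrite /unif_const addrC addKr; apply: le_bigmax. Qed.

Lemma c_ge1 : 1 <= unif_const q.
Proof.
rewrite /unif_const lerDl.
elim/big_rec: _ => // i y _ y0; by rewrite le_max y0 orbT.
Qed.

Lemma c_gt0 : 0 < unif_const q.
Proof. exact: lt_le_trans ltr01 c_ge1. Qed.

Lemma K_ge0 : (forall x y, x != y -> 0 <= q x y) -> forall x y, 0 <= unif_kernel q x y.
Proof.
move=> q0 x y; rewrite /unif_kernel; case: eqVneq => [_|xy].
  rewrite subr_ge0 ler_pdivrMr ?c_gt0 // mul1r.
  by apply: le_trans (exit_le x) _; rewrite lerBlDr lerDl.
by apply: divr_ge0; [exact: q0 | exact: ltW c_gt0].
Qed.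

Lemma K_sum x (w : S -> R) : \sum_y unif_kernel q x y * w y =
  w x + (unif_const q)^-1 * \sum_(y | y != x) q x y * (w y - w x).
Proof.
rewrite (bigD1 x) //= /unif_kernel eqxx.
rewrite (eq_bigr (fun y => (unif_const q)^-1 * (q x y * w y))); last first.
  by move=> y yx; rewrite eq_sym (negbTE yx) mulrAC mulrC.
rewrite -big_distrr /= /exit_rate.
have -> : \sum_(y | y != x) q x y * (w y - w x) =
  \sum_(y | y != x) q x y * w y - (\sum_(y | y != x) q x y) * w x.
  by rewrite big_distrl -sumrB; apply: eq_bigr => y _; rewrite mulrBr.
have c0 := c_gt0; set c := unif_const q; set e := \sum_(z | z != x) q x z.
by field; rewrite gt_eqF.
Qed.
End K.
Section Rates.
Variables (R : realType) (n : nat) (theta alpha beta : R).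
Hypotheses (ha : 0 < alpha < 1) (hb : 0 < beta < 1).

Definition rr (eta : Config n) x : R :=
  rsite alpha beta x * (1 - (occ eta x)%:R) + (1 - rsite alpha beta x) * (occ eta x)%:R.

Lemma rr_bounds eta x : 0 <= rr eta x <= 1.
Proof.
have [r0 r1] : 0 <= rsite alpha beta x /\ rsite alpha beta x <= 1.
  case/andP: ha => a0 a1; case/andP: hb => b0 b1.
  by rewrite /rsite; case: eqP => _; split; apply: ltW.
rewrite /rr; case: (occ eta x) => /=; rewrite ?subrr ?subr0 ?mulr0 ?mulr1 ?add0r ?addr0.
  by rewrite subr_ge0 r1 lerBlDr lerDl r0.
by rewrite r0 r1.
Qed.

Lemma sum_ind (a b : Config n) (g : Config n -> R) :
  \sum_y (((a == y)%:R - (b == y)%:R) * g y) = g a - g b.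
Proof.
have h c : \sum_y ((c == y)%:R * g y) = g c.
  rewrite (bigD1 c) //= eqxx mul1r big1 ?addr0 // => y yc.
  by rewrite eq_sym (negbTE yc) mul0r.
by rewrite -(h a) -(h b) -sumrB; apply: eq_bigr => y _; rewrite mulrBl.
Qed.

Lemma Lgen_lin (g : Config n -> R) eta :
  \sum_y Lgen theta alpha beta (fun xi => (xi == y)%:R) eta * g y = Lgen theta alpha beta g eta.
Proof.
rewrite /Lgen.
under eq_bigr => y _ do rewrite mulrDl.
rewrite big_split; congr (_ + _).
  under eq_bigr => y _ do rewrite big_distrl.
  rewrite exchange_big; apply: eq_bigr => a _; exact: sum_ind.
under eq_bigr => y _ do rewrite -mulrA big_distrl.
rewrite -big_distrr; congr (_ * _); rewrite exchange_big; apply: eq_bigr => b _.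
rewrite -sum_ind big_distrr; apply: eq_bigr => y _.
by rewrite /= mulrA.
Qed.

Lemma rates_ge0 (x y : Config n) : x != y -> 0 <= rates theta alpha beta x y.
Proof.
move=> xy; rewrite /rates /Lgen (negbTE xy).
apply: mulr_ge0; first by rewrite exprn_ge0 ?ler0n.
apply: addr_ge0; first by apply: sumr_ge0 => a _; rewrite /= subr0 ler0n.
apply: mulr_ge0; first exact: powR_ge0.
apply: sumr_ge0 => b _; rewrite /= subr0; apply: mulr_ge0 => //.
by case/andP: (rr_bounds x b).
Qed.

End Rates.
Lemma expR_ge1 (R : realType) (z : R) : 0 <= z -> 1 <= expR z.
Proof. by move=> z0; apply: le_trans (expR_ge1Dx z); rewrite lerDl. Qed.

Section Step.
Variables (R : realType) (n : nat) (theta alpha beta : R).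
Hypotheses (ha : 0 < alpha < 1) (hb : 0 < beta < 1) (n0 : (0 < n)%N).

Let q := rates theta alpha beta : Config n -> Config n -> R.
Let K := unif_kernel q.
Let c := unif_const q.
Let m := mass R (n:=n).
Let C := n%:R `^ (- theta) : R.

Lemma step_bound t (x : Config n) : 0 <= t ->
  \sum_y K x y * expR (n%:R * t * `|m y - m x|) <=
  1 + c^-1 * (n%:R ^+ 2 * (C * (2 * (expR t - 1)))).
Proof.
move=> t0; rewrite /K K_sum subrr normr0 mulr0 expR0 lerD2l.
have c0 : 0 < c := @c_gt0 _ _ q.
apply: ler_wpM2l; first by rewrite invr_ge0 ltW.
set g := fun y => expR (n%:R * t * `|m y - m x|) - 1.
have gx : g x = 0 by rewrite /g subrr normr0 mulr0 expR0 subrr.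
have -> : \sum_(y | y != x) q x y * (expR (n%:R * t * `|m y - m x|) - 1) =
          \sum_y q x y * g y.
  by rewrite [RHS](bigD1 x) //= gx mulr0 add0r.
have -> : \sum_y q x y * g y = n%:R ^+ 2 * Lgen theta alpha beta g x.
  rewrite -Lgen_lin big_distrr /=; apply: eq_bigr => y _.
  by rewrite /q /rates mulrA.
apply: ler_wpM2l; first by rewrite exprn_ge0 ?ler0n.
rewrite /Lgen gx.
rewrite big_nat_cond big1 ?add0r; last first.
  move=> a /andP[/andP[a1 an] _]; rewrite subr0 /g.
  by rewrite /m mass_exch // subrr normr0 mulr0 expR0 subrr.
apply: ler_wpM2l; first exact: powR_ge0.
have hf b : 0 <= rr R n alpha beta x b * (g (flip x b) - 0) <= expR t - 1.
  rewrite subr0; case/andP: (@rr_bounds _ _ _ _ ha hb x b) => r0 r1.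
  have g0 : 0 <= g (flip x b).
    by rewrite /g subr_ge0 expR_ge1 // !mulr_ge0 ?ler0n.
  have g1 : g (flip x b) <= expR t - 1.
    rewrite /g lerD2r ler_expR -mulrA mulrCA -[leRHS]mulr1; apply: ler_wpM2l => //.
    apply: (@le_trans _ _ (n%:R * n%:R^-1)); first by apply: ler_wpM2l; [rewrite ler0n | exact: mass_flip].
    by rewrite mulfV // pnatr_eq0 -lt0n.
  rewrite mulr_ge0 //=; apply: le_trans g1; rewrite -[leRHS]mul1r.
  exact: ler_wpM2r.
rewrite /=; case: ifP => _; rewrite ?big_cons big_nil addr0.
  case/andP: (hf n.-1) => h0 h1; rewrite /rr in h0 h1.
  lra.
case/andP: (hf n.-1) => h0 h1; case/andP: (hf 1%N) => h2 h3; rewrite /rr in h0 h1 h2 h3; lra.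
Qed.

Lemma ind_bound (u lam : R) (x0 : Config n) (s : seq (Config n)) : 0 <= u ->
  ((mass_dev_event lam x0 (x0 :: s))%:R : R) <=
  expR (- (u * lam)) * expR (u * D R _ m (x0 :: s)).
Proof.
move=> u0; rewrite -expRD /mass_dev_event.
case: hasP => [[y yin hy]|_]; last exact: expR_ge0.
apply: expR_ge1; rewrite addrC subr_ge0 ler_wpM2l //.
by apply: le_trans (ltW hy) _; apply: D_bound.
Qed.

Lemma prob_bound (t T lam : R) (x0 : Config n) : 0 <= t -> 0 <= T ->
  0 <= prob_mass_dev theta alpha beta T lam x0 <=
  expR (- (n%:R * t * lam) + T * (n%:R ^+ 2 * (C * (2 * (expR t - 1))))).
Proof.
move=> t0 T0.
have c0 : 0 < c := @c_gt0 _ _ q.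
have K0 : forall x y, 0 <= K x y by apply: K_ge0 => x y; exact: rates_ge0.
set Y := n%:R ^+ 2 * (C * (2 * (expR t - 1))).
set B := 1 + c^-1 * Y.
set u := n%:R * t.
have u0 : 0 <= u by rewrite mulr_ge0 ?ler0n.
have Y0 : 0 <= Y.
  rewrite !mulr_ge0 ?exprn_ge0 ?ler0n ?powR_ge0 // subr_ge0; exact: expR_ge1.
have B0 : 0 <= B by rewrite addr_ge0 // mulr_ge0 // invr_ge0 ltW.
have sk k : 0 <= skeleton_prob q x0 k (mass_dev_event lam x0) <= expR (- (u * lam)) * B ^+ k.
  change (0 <= W R _ K x0 k (fun s => (mass_dev_event lam x0 s)%:R) <= expR (- (u * lam)) * B ^+ k).
  apply/andP; split.
    by apply: sumr_ge0 => ys _; rewrite mulr_ge0 ?ler0n // prodr_ge0.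
  apply: le_trans (@W_le R _ K x0 k _ (fun s => expR (- (u * lam)) * expR (u * D R _ m s)) K0 _) _.
    by move=> ys; apply: ind_bound.
  rewrite W_scale ler_wpM2l ?expR_ge0 //.
  apply: W_exp => // x; exact: step_bound.
rewrite /prob_mass_dev /path_event_prob -/c.
have cT0 : 0 <= c * T by rewrite mulr_ge0 // ltW.
have := @series_pois R (fun k => expR (- (c * T)) * (c * T) ^+ k / (k`!)%:R *
      skeleton_prob q x0 k (mass_dev_event lam x0)) (c * T * B)
      (expR (- (c * T)) * expR (- (u * lam))).
case.
- by rewrite mulr_ge0.
- by rewrite mulr_ge0 ?expR_ge0.
- move=> k; case/andP: (sk k) => s0 s1; apply/andP; split.
    by rewrite !mulr_ge0 ?expR_ge0 ?exprn_ge0 ?invr_ge0 ?ler0n.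
  apply: le_trans (ler_wpM2l _ s1) _.
    by rewrite !mulr_ge0 ?expR_ge0 ?exprn_ge0 ?invr_ge0 ?ler0n.
  by rewrite /exp_coeff /= !exprMn le_eqVlt; apply/orP; left; apply/eqP; ring.
move=> _ /andP[p0 p1]; rewrite p0 /=; apply: le_trans p1 _.
rewrite -!expRD ler_expR /B le_eqVlt; apply/orP; left; apply/eqP.
by field; rewrite gt_eqF.
Qed.
End Step.

Section Final.
Variables (R : realType) (alpha beta theta T : R).
Hypotheses (ha : 0 < alpha < 1) (hb : 0 < beta < 1) (hT : 0 < T) (htheta : 1 < theta).

Lemma final_bound n (x0 : Config n) (lam : R) : (0 < n)%N ->
  (((n%:R)^-1)%:E * elog (@prob_mass_dev R n theta alpha beta T lam x0) <=
   (- ((theta - 1) * ln (n%:R) * lam) + 2 * T)%:E)%E.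
Proof.
move=> n0.
have nR0 : 0 < n%:R :> R by rewrite ltr0n.
have lnge0 : 0 <= ln (n%:R : R) by apply: ln_ge0; rewrite ler1n.
set t := (theta - 1) * ln (n%:R : R).
have t0 : 0 <= t by rewrite mulr_ge0 // subr_ge0 ltW.
have := @prob_bound R n theta alpha beta ha hb n0 t T lam x0 t0 (ltW hT).
set p := prob_mass_dev _ _ _ _ _ _ => /andP[p0 p1].
have key : n%:R ^+ 2 * (n%:R `^ (- theta) * expR t) = n%:R :> R.
  rewrite /powR gt_eqF // -expRD /t.
  have -> : - theta * ln (n%:R : R) + (theta - 1) * ln n%:R = - ln (n%:R : R) by ring.
  by rewrite expRN lnK ?posrE // expr2 mulfK // gt_eqF.
have p2 : p <= expR (n%:R * (- (t * lam) + 2 * T)).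
  apply: le_trans p1 _; rewrite ler_expR.
  have Y2 : T * (n%:R ^+ 2 * (n%:R `^ (- theta) * (2 * (expR t - 1)))) <= 2 * T * n%:R.
    have -> : 2 * T * n%:R = T * (n%:R ^+ 2 * (n%:R `^ (- theta) * (2 * expR t))).
      by rewrite -[in LHS]key; ring.
    rewrite ler_wpM2l ?(ltW hT) // ler_wpM2l ?exprn_ge0 ?ler0n //.
    rewrite ler_wpM2l ?powR_ge0 // ler_wpM2l // gerDl lerN10 //.
  rewrite (_ : n%:R * (- (t * lam) + 2 * T) = - (n%:R * t * lam) + 2 * T * n%:R); last by ring.
  by rewrite lerD2l.
rewrite /elog; case: eqP => [_|/eqP pn0].
  by rewrite gt0_muleNy ?lte_fin ?invr_gt0 // leNye.
rewrite -EFinM lee_fin.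
have pp : 0 < p by rewrite lt_neqAle eq_sym pn0.
rewrite ler_pdivrMl // -/t.
rewrite -(expRK (n%:R * (- (t * lam) + 2 * T))).
by rewrite ler_ln ?posrE ?expR_gt0.
Qed.
End Final.

Theorem mainTheorem8 (R : realType) (alpha beta theta T : R)
  (halpha : 0 < alpha < 1) (hbeta : 0 < beta < 1) (hT : 0 < T)
  (htheta : 1 < theta) (eta : forall n : nat, Config n) :
  forall lambda : R, 0 < lambda ->
  limn_esup (fun n : nat =>
     ((n%:R)^-1)%:E
       * elog (@prob_mass_dev R n theta alpha beta T lambda (eta n)))%E
  = -oo%E.
Proof.
move=> lam lam0.
apply: (cvgNy_limn_einf_sup _).2.
apply/cvgeNyPle => M.
have tl0 : 0 < (theta - 1) * lam by rewrite mulr_gt0 // subr_gt0.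
set A := (2 * T - M) / ((theta - 1) * lam).
near=> N.
apply: le_trans (@final_bound R alpha beta theta T halpha hbeta hT htheta N (eta N) lam _) _.
  by near: N; exact: (nbhs_infty_gt 0).
rewrite lee_fin.
have hN : expR A <= N%:R :> R by near: N; exact: nbhs_infty_ger.
have NR0 : 0 < N%:R :> R by apply: lt_le_trans hN; exact: expR_gt0.
have lnA : A <= ln (N%:R : R).
  by rewrite -(expRK A) ler_ln ?posrE ?expR_gt0.
have : A * ((theta - 1) * lam) <= ln (N%:R : R) * ((theta - 1) * lam).
  by rewrite ler_wpM2r // ltW.
rewrite /A mulfVK ?gt_eqF //.
move=> h; rewrite -mulrA mulrC; lra.
Unshelve. all: by end_near.
Qed.
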